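(* The real form $$O_{(4,1)}(x,y,z,w)=x^4z^2w^2+y^4x^2w^2+z^4x^2y^2+w^4y^2z^2-4x^2y^2z^2w^2$$ is an extremal element of $\mathcal P_{4,8}$.
   Context: $\mathcal P_{n,m}$ denotes the convex cone of all positive semidefinite real forms (homogeneous polynomials nonnegative on $\mathbb R^n$) in $n$ variables of degree $m$. A form $F\in\mathcal P_{n,m}$ is extremal if $F=F_1+F_2$ with $F_1,F_2\in\mathcal P_{n,m}$ implies $F_i=\lambda_iF$ for some nonnegative reals $\lambda_i$. *)

(* Defs.v *)
From HB Require Import structures.
From mathcomp Require Import all_boot all_order all_algebra.
From mathcomp Require Import reals.
From mathcomp Require Import mpoly.
Set Implicit Arguments. Unset Strict Implicit. Unset Printing Implicit Defensive.
Import Order.TTheory GRing.Theory Num.Theory.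
Local Open Scope ring_scope.

Definition psd_form (R : realType) (n m : nat) (F : {mpoly R[n]}) : Prop :=
  F \is m.-homog /\ forall x : 'I_n -> R, 0 <= F.@[x].

Definition extremal_psd (R : realType) (n m : nat) (F : {mpoly R[n]}) : Prop :=
  psd_form m F /\
  forall F1 F2 : {mpoly R[n]}, psd_form m F1 -> psd_form m F2 -> F = F1 + F2 ->
    exists l1 l2 : R, [/\ 0 <= l1, 0 <= l2, F1 = l1 *: F & F2 = l2 *: F].

Definition O41 (R : realType) : {mpoly R[4]} :=
  let x := 'X_(inord 0) in let y := 'X_(inord 1) in
  let z := 'X_(inord 2) in let w := 'X_(inord 3) in
  x^+4 * z^+2 * w^+2 + y^+4 * x^+2 * w^+2 + z^+4 * x^+2 * y^+2
  + w^+4 * y^+2 * z^+2 - 4%:R * (x^+2 * y^+2 * z^+2 * w^+2).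

(* Main.v *)
Require Import Defs.
From HB Require Import structures.
From mathcomp Require Import all_boot all_order all_algebra.
From mathcomp Require Import reals.
From mathcomp Require Import mpoly.
From mathcomp Require Import polyrcf.
From mathcomp Require Import ring lra zify.
Set Implicit Arguments. Unset Strict Implicit. Unset Printing Implicit Defensive.
Import Order.TTheory GRing.Theory Num.Theory.

Definition Elist : seq (seq nat) := flatten [seq flatten [seq [seq [:: a; b; c; 8 - a - b - c] | c <- iota 0 (9 - a - b)] | b <- iota 0 (9 - a)] | a <- iota 0 9].
Definition L15 : seq (seq nat) := [:: [::0;2;2;4]; [::1;2;2;3]; [::1;2;3;2]; [::1;3;1;3]; [::2;1;2;3]; [::2;2;2;2]; [::2;2;3;1]; [::2;2;4;0]; [::2;3;1;2]; [::2;3;2;1]; [::2;4;0;2]; [::3;1;2;2]; [::3;1;3;1]; [::3;2;1;2]; [::4;0;2;2]].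
Definition kdot (k e : seq nat) := nth 0 k 0 * nth 0 e 0 + nth 0 k 1 * nth 0 e 1 + nth 0 k 2 * nth 0 e 2 + nth 0 k 3 * nth 0 e 3.
Definition jO k := minn (kdot k [::0;2;2;4]) (minn (kdot k [::2;2;2;2]) (minn (kdot k [::2;2;4;0]) (minn (kdot k [::2;4;0;2]) (kdot k [::4;0;2;2])))).
Definition good k e := (kdot k e < jO k) && ([seq e' <- Elist | kdot k e' == kdot k e] == [:: e]).
Definition Klist : seq (seq nat) := [:: [:: 0; 7; 13; 16]; [:: 11; 13; 16; 0]; [:: 16; 13; 0; 9]; [:: 16; 0; 9; 13]; [:: 0; 12; 2; 13]; [:: 0; 11; 16; 1]; [:: 5; 16; 4; 0]; [:: 15; 0; 7; 13]; [:: 0; 7; 9; 15]; [:: 8; 13; 0; 6]; [:: 7; 9; 15; 0]; [:: 13; 0; 5; 11]; [:: 8; 2; 5; 0]; [:: 0; 1; 12; 16]].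

Local Open Scope ring_scope.
Lemma check_all : all (fun e => (e \in L15) || has (fun k => good k e) Klist) Elist.
Proof. vm_compute. reflexivity. Qed.
Lemma L15_filter : [seq e <- Elist | e \in L15] = L15.
Proof. vm_compute. reflexivity. Qed.

Section S.
Variable R : realType.

Lemma pos_lim0 (g : {poly R}) : (forall t, 0 < t -> 0 <= g.[t]) -> 0 <= g.[0].
Proof.
move=> H; rewrite leNgt; apply/negP => Hneg.
have he : 0 < - g.[0] / 2 by rewrite divr_gt0 // oppr_gt0.
have [d d0 Hd] := poly_cont 0 g he.
have t0 : 0 < d / 2 by rewrite divr_gt0.
have := Hd (d / 2); rewrite subr0 gtr0_norm // ltr_pdivrMr // ltr_pMr // ltr1n.
move=> /(_ isT) Hb.
have := H _ t0.
move: Hb; set u := g.[d / 2]; set v := g.[0] => Hb Hu.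
have : `|u - v| < - v / 2 by [].
rewrite ltr_norml => /andP[H1 H2].
lra.
Qed.

Lemma neg_lim0 (g : {poly R}) : (forall t, t < 0 -> 0 <= g.[t]) -> 0 <= g.[0].
Proof.
move=> H; rewrite leNgt; apply/negP => Hneg.
have he : 0 < - g.[0] / 2 by rewrite divr_gt0 // oppr_gt0.
have [d d0 Hd] := poly_cont 0 g he.
have t0 : - (d / 2) < 0 by rewrite oppr_lt0 divr_gt0.
have := Hd (- (d / 2)); rewrite subr0 normrN gtr0_norm ?divr_gt0 // ltr_pdivrMr // ltr_pMr // ltr1n.
move=> /(_ isT) Hb.
have := H _ t0.
move: Hb; set u := g.[- (d / 2)]; set v := g.[0] => Hb Hu.
move: Hb; rewrite ltr_norml => /andP[H1 H2].
lra.
Qed.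


Lemma split_low (p : {poly R}) i : (forall i', (i' < i)%N -> p`_i' = 0) ->
  p = drop_poly i p * 'X^i.
Proof.
move=> H; rewrite -{1}(poly_take_drop i p).
have -> : take_poly i p = 0; last by rewrite add0r.
apply/polyP => k; rewrite coef_take_poly coef0; case: ifP => // /H //.
Qed.

Lemma order_lemma (p q : {poly R}) (j : nat) :
  (forall t, 0 < t -> 0 <= p.[t] <= q.[t]) ->
  (forall i, (i < j)%N -> q`_i = 0) ->
  forall i, (i < j)%N -> p`_i = 0.
Proof.
move=> Hpq Hq i; elim/ltn_ind: i => i IH Hij.
have Hp := split_low (fun i' (h : (i' < i)%N) => IH i' h (ltn_trans h Hij)).
have Hq' := split_low (fun i' (h : (i' < i)%N) => Hq i' (ltn_trans h Hij)).
set p1 := drop_poly i p in Hp; set q1 := drop_poly i q in Hq'.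
have H1 : forall t, 0 < t -> 0 <= p1.[t] /\ 0 <= (q1 - p1).[t].
  move=> t t0; have := Hpq t t0; rewrite {1 2}Hp {1}Hq' !hornerE.
  have ti : 0 < t ^+ i by rewrite exprn_gt0.
  rewrite pmulr_lge0 // ler_pM2r // => /andP[a b]; split => //; lra.
have A := pos_lim0 (fun t t0 => (H1 t t0).1).
have B := pos_lim0 (fun t t0 => (H1 t t0).2).
move: A B; rewrite !hornerE !horner_coef0 !coef_drop_poly add0n Hq //.
lra.
Qed.

Definition mon (x : 'I_4 -> R) (e : seq nat) := \prod_(j < 4) x j ^+ nth 0%N e j.
Definition ev (c : seq nat -> R) x := \sum_(e <- Elist) c e * mon x e.
Definition tk (t : R) (k : seq nat) : 'I_4 -> R := fun j => t ^+ nth 0%N k j.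

Lemma mon_tk t k e : mon (tk t k) e = t ^+ kdot k e.
Proof.
rewrite /mon /tk /kdot !big_ord_recr big_ord0 /= mul1r -!exprM -!exprD.
done.
Qed.

Definition Pw (c : seq nat -> R) k : {poly R} := \sum_(e <- Elist) c e *: 'X^(kdot k e).

Lemma Pw_horner c k t : (Pw c k).[t] = ev c (tk t k).
Proof.
rewrite /Pw /ev horner_sum; apply: eq_bigr => e _.
by rewrite hornerZ hornerXn mon_tk.
Qed.

Lemma Pw_coef c k i : (Pw c k)`_i = \sum_(e <- Elist | kdot k e == i) c e.
Proof.
rewrite /Pw coef_sum [RHS]big_mkcond /=; apply: eq_bigr => e _.
by rewrite coefZ coefXn eq_sym; case: eqP => _; rewrite ?mulr1 ?mulr0.
Qed.

Definition ocoef (e : seq nat) : R :=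
  if e == [::2;2;2;2] then -4 else
  if e \in [:: [::0;2;2;4]; [::2;2;4;0]; [::2;4;0;2]; [::4;0;2;2]] then 1 else 0.

Lemma ocoef_supp e : ocoef e != 0 -> forall k, (jO k <= kdot k e)%N.
Proof.
rewrite /ocoef; case: ifP => [/eqP -> _ k|_]; first by rewrite /jO /kdot /=; lia.
case: ifP => [|_]; last by rewrite eqxx.
rewrite !inE => /or4P[] /eqP -> _ k; rewrite /jO /kdot /=; lia.
Qed.


Lemma WL c (Hc : forall x, 0 <= ev c x <= ev ocoef x) k e : good k e -> c e = 0.
Proof.
move=> /andP[Hlt /eqP Hf].
have H0 := @order_lemma (Pw c k) (Pw ocoef k) (jO k) _ _ (kdot k e) Hlt.
rewrite Pw_coef -big_filter Hf big_seq1 in H0; apply: H0.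
  by move=> t _; rewrite !Pw_horner; exact: Hc.
move=> i Hi; rewrite Pw_coef big1 // => e' /eqP He'.
case: (ocoef e' =P 0) => // /eqP /ocoef_supp /(_ k); lia.
Qed.

Lemma deriv0 (q : {poly R}) : (forall t, 0 <= q.[t]) -> q.[0] = 0 -> q`_1 = 0.
Proof.
move=> Hq H0.
have Hs : q = drop_poly 1 q * 'X^1.
  apply: split_low => -[|//] _; by rewrite -horner_coef0.
set r := drop_poly 1 q in Hs.
have r0 : r.[0] = q`_1 by rewrite horner_coef0 coef_drop_poly.
have A : 0 <= r.[0].
  apply: pos_lim0 => u u0; have := Hq u; by rewrite {1}Hs hornerE hornerX pmulr_lge0.
have B : 0 <= (- r).[0].
  apply: neg_lim0 => u u0; have := Hq u; rewrite {1}Hs hornerE hornerX hornerN.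
  by rewrite nmulr_lge0 // oppr_ge0.
move: A B; rewrite hornerN r0; lra.
Qed.

Lemma coef1_lin (a : R) n : ((a%:P + 'X) ^+ n)`_1 = n%:R * a ^+ n.-1.
Proof.
elim: n => [|n IH]; first by rewrite expr0 coefC /= mul0r.
rewrite exprSr mulrDr coefD coefMC coefMX /= IH -horner_coef0 horner_exp hornerD hornerC hornerX addr0.
case: n {IH} => [|n] /=; first by rewrite !expr0 !mul0r add0r mul1r.
rewrite exprSr; ring.
Qed.

Definition xs (x : 'I_4 -> R) (i : 'I_4) (t : R) : 'I_4 -> R :=
  fun j => if j == i then x j + t else x j.

Definition linepoly c x (i : 'I_4) : {poly R} :=
  \sum_(e <- Elist) (c e * \prod_(j < 4 | j != i) x j ^+ nth 0%N e j) *: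
     ((x i)%:P + 'X) ^+ nth 0%N e i.

Definition grad c x (i : 'I_4) : R :=
  \sum_(e <- Elist) c e * (\prod_(j < 4 | j != i) x j ^+ nth 0%N e j) *
     ((nth 0%N e i)%:R * x i ^+ (nth 0%N e i).-1).

Lemma mon_xs x i t e : mon (xs x i t) e =
  (x i + t) ^+ nth 0%N e i * \prod_(j < 4 | j != i) x j ^+ nth 0%N e j.
Proof.
rewrite /mon (bigD1 i) //= /xs eqxx; congr (_ * _).
by apply: eq_bigr => j /negbTE ->.
Qed.

Lemma linepoly_horner c x i t : (linepoly c x i).[t] = ev c (xs x i t).
Proof.
rewrite /linepoly /ev horner_sum; apply: eq_bigr => e _.
rewrite hornerZ horner_exp hornerD hornerC hornerX mon_xs; ring.
Qed.

Lemma linepoly_coef1 c x i : (linepoly c x i)`_1 = grad c x i.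
Proof.
rewrite /linepoly /grad coef_sum; apply: eq_bigr => e _.
by rewrite coefZ coef1_lin mulrA.
Qed.

Lemma ev_xs0 c x i : ev c (xs x i 0) = ev c x.
Proof.
apply: eq_bigr => e _; congr (_ * _); apply: eq_bigr => j _.
by rewrite /xs addr0; case: ifP.
Qed.

Lemma DL c (Hc : forall x, 0 <= ev c x) x (H0 : ev c x = 0) i : grad c x i = 0.
Proof.
rewrite -linepoly_coef1; apply: deriv0.
  by move=> t; rewrite linepoly_horner.
by rewrite linepoly_horner ev_xs0.
Qed.

Lemma sum_L (f : seq nat -> R) : (forall e, e \in Elist -> e \notin L15 -> f e = 0) ->
  \sum_(e <- Elist) f e = \sum_(e <- L15) f e.
Proof.
move=> H; rewrite -L15_filter big_filter [RHS]big_mkcond /=.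
apply: eq_big_seq => e He; case: ifP => // /negbT; exact: H.
Qed.

Lemma zero_out c (Hc : forall x, 0 <= ev c x <= ev ocoef x) e :
  e \in Elist -> e \notin L15 -> c e = 0.
Proof.
move=> He Hn; have /allP/(_ e He) := check_all; rewrite (negbTE Hn) orFb => /hasP[k _].
exact: WL.
Qed.

Lemma ocoef_out e : e \notin L15 -> ocoef e = 0.
Proof.
move=> Hn; rewrite /ocoef; case: ifP => [/eqP He|_]; first by rewrite He in Hn.
case: ifP => // H; move: Hn H; rewrite !inE => + /or4P[] /eqP He; rewrite He.
all: by [].
Qed.

Definition sg (a b c d : R) : 'I_4 -> R := fun j => nth 0 [:: a; b; c; d] j.

Lemma mon_sg a b c d e : mon (sg a b c d) e =
  a ^+ nth 0%N e 0 * b ^+ nth 0%N e 1 * c ^+ nth 0%N e 2 * d ^+ nth 0%N e 3.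
Proof. by rewrite /mon !big_ord_recr big_ord0 /= mul1r. Qed.

Definition gmon (x : 'I_4 -> R) (i : 'I_4) (e : seq nat) :=
  (\prod_(j < 4 | j != i) x j ^+ nth 0%N e j) * ((nth 0%N e i)%:R * x i ^+ (nth 0%N e i).-1).

Lemma gmon_sg0 a b c d e : gmon (sg a b c d) (@Ordinal 4 0 isT) e =
  (b ^+ nth 0%N e 1 * c ^+ nth 0%N e 2 * d ^+ nth 0%N e 3) * ((nth 0%N e 0)%:R * a ^+ (nth 0%N e 0).-1).
Proof. by rewrite /gmon big_mkcond !big_ord_recr big_ord0 /sg /= !mul1r. Qed.

Lemma gmon_sg1 a b c d e : gmon (sg a b c d) (@Ordinal 4 1 isT) e =
  (a ^+ nth 0%N e 0 * c ^+ nth 0%N e 2 * d ^+ nth 0%N e 3) * ((nth 0%N e 1)%:R * b ^+ (nth 0%N e 1).-1).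
Proof. by rewrite /gmon big_mkcond !big_ord_recr big_ord0 /sg /= !mul1r !mulr1. Qed.

Lemma gmon_sg2 a b c d e : gmon (sg a b c d) (@Ordinal 4 2 isT) e =
  (a ^+ nth 0%N e 0 * b ^+ nth 0%N e 1 * d ^+ nth 0%N e 3) * ((nth 0%N e 2)%:R * c ^+ (nth 0%N e 2).-1).
Proof. by rewrite /gmon big_mkcond !big_ord_recr big_ord0 /sg /= !mul1r !mulr1. Qed.

Lemma ev_ocoef a b c d : ev ocoef (sg a b c d) =
  a^+4 * c^+2 * d^+2 + b^+4 * a^+2 * d^+2 + c^+4 * a^+2 * b^+2 + d^+4 * b^+2 * c^+2
  - 4%:R * (a^+2 * b^+2 * c^+2 * d^+2).
Proof.
rewrite /ev sum_L; last by move=> e _ /ocoef_out ->; rewrite mul0r.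
rewrite !big_cons big_nil !mon_sg /ocoef /=; ring.
Qed.

Section MTs.
Variable c : seq nat -> R.
Hypothesis Hc : forall x, 0 <= ev c x <= ev ocoef x.

Lemma evL x : ev c x = \sum_(e <- L15) c e * mon x e.
Proof. rewrite /ev sum_L // => e H1 H2; by rewrite (zero_out Hc H1 H2) mul0r. Qed.

Lemma gradL x i : grad c x i = \sum_(e <- L15) c e * gmon x i e.
Proof.
rewrite /grad sum_L; last by move=> e H1 H2; rewrite (zero_out Hc H1 H2) !mul0r.
by apply: eq_bigr => e _; rewrite /gmon [RHS]mulrA.
Qed.

Lemma val0 a b c' d : (a ^+ 2 = 1) -> (b ^+ 2 = 1) -> (c' ^+ 2 = 1) -> (d ^+ 2 = 1) ->
  ev c (sg a b c' d) = 0.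
Proof.
move=> ha hb hc hd; have := Hc (sg a b c' d); rewrite ev_ocoef.
have -> : a ^+ 4 = 1 by rewrite (_ : 4 = 2 * 2)%N // exprM ha expr1n.
have -> : b ^+ 4 = 1 by rewrite (_ : 4 = 2 * 2)%N // exprM hb expr1n.
have -> : c' ^+ 4 = 1 by rewrite (_ : 4 = 2 * 2)%N // exprM hc expr1n.
have -> : d ^+ 4 = 1 by rewrite (_ : 4 = 2 * 2)%N // exprM hd expr1n.
rewrite ha hb hc hd => /andP[]; lra.
Qed.

Lemma grad0 a b c' d i : (a ^+ 2 = 1) -> (b ^+ 2 = 1) -> (c' ^+ 2 = 1) -> (d ^+ 2 = 1) ->
  \sum_(e <- L15) c e * gmon (sg a b c' d) i e = 0.
Proof.
move=> ha hb hc hd; rewrite -gradL.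
have Hc0 : forall x, 0 <= ev c x by move=> x; case/andP: (Hc x).
exact: (DL Hc0 (val0 ha hb hc hd)).
Qed.

Lemma MT e : e \in Elist -> c e = c [::4;0;2;2] * ocoef e.
Proof.
have s1 : (1 : R) ^+ 2 = 1 by rewrite expr1n.
have s2 : (-1 : R) ^+ 2 = 1 by rewrite sqrrN expr1n.
have V1 := val0 s1 s1 s1 s1.
have V2 := val0 s1 s1 s1 s2.
have V3 := val0 s1 s1 s2 s1.
have V4 := val0 s1 s1 s2 s2.
have V5 := val0 s1 s2 s1 s1.
have G1 := grad0 (@Ordinal 4 0 isT) s1 s1 s1 s1.
have G2 := grad0 (@Ordinal 4 1 isT) s1 s1 s1 s1.
have G3 := grad0 (@Ordinal 4 2 isT) s1 s1 s1 s1.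
have G4 := grad0 (@Ordinal 4 0 isT) s1 s1 s1 s2.
have G5 := grad0 (@Ordinal 4 1 isT) s1 s1 s1 s2.
have G6 := grad0 (@Ordinal 4 2 isT) s1 s1 s1 s2.
have G7 := grad0 (@Ordinal 4 0 isT) s1 s1 s2 s1.
have G8 := grad0 (@Ordinal 4 1 isT) s1 s1 s2 s1.
have G9 := grad0 (@Ordinal 4 0 isT) s1 s1 s2 s2.
move: V1 V2 V3 V4 V5; rewrite !evL !big_cons !big_nil !mon_sg /= => V1 V2 V3 V4 V5.
move: G1 G2 G3 G4 G5 G6 G7 G8 G9; rewrite !big_cons !big_nil ?gmon_sg0 ?gmon_sg1 ?gmon_sg2 /=.
move=> G1 G2 G3 G4 G5 G6 G7 G8 G9.
have m3 : (-1 : R) ^+ 3 = -1 by rewrite exprS s2 mulr1.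
have m4 : (-1 : R) ^+ 4 = 1 by rewrite exprS m3 mulrNN mulr1.
move: V1 V2 V3 V4 V5 G1 G2 G3 G4 G5 G6 G7 G8 G9.
rewrite ?expr0 ?expr1 ?expr1n ?s2 ?m3 ?m4 ?mul1r ?mulr1 ?mulN1r ?mulrN1 ?mulrN ?mulNr ?opprK ?addr0.
move=> V1 V2 V3 V4 V5 G1 G2 G3 G4 G5 G6 G7 G8 G9.
move=> He; case: (boolP (e \in L15)) => [|Hn]; last first.
  by rewrite (zero_out Hc He Hn) (ocoef_out Hn) mulr0.
rewrite !inE => /orP[/eqP->|/orP[/eqP->|/orP[/eqP->|/orP[/eqP->|/orP[/eqP->|/orP[/eqP->|/orP[/eqP->|/orP[/eqP->|/orP[/eqP->|/orP[/eqP->|/orP[/eqP->|/orP[/eqP->|/orP[/eqP->|/orP[/eqP->|/eqP->]]]]]]]]]]]]]]; rewrite /ocoef /=.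
all: lra.
Qed.
End MTs.
End S.

Local Close Scope ring_scope.


Lemma Elist_size : all (fun e => size e == 4) Elist.
Proof. vm_compute. reflexivity. Qed.
Lemma Elist_uniq : uniq Elist.
Proof. vm_compute. reflexivity. Qed.

Lemma Elist_mem a b c d : a + b + c + d = 8 -> [:: a; b; c; d] \in Elist.
Proof.
move=> H; apply/flatten_mapP; exists a; first by rewrite mem_iota; lia.
apply/flatten_mapP; exists b; first by rewrite mem_iota; lia.
apply/mapP; exists c; first by rewrite mem_iota; lia.
have -> : d = 8 - a - b - c by lia.
done.
Qed.

Local Open Scope ring_scope.

Definition mk (e : seq nat) : 'X_{1..4} := [multinom nth 0%N e i | i < 4].
Definition e_of (m : 'X_{1..4}) : seq nat :=
  [:: m (@Ordinal 4 0 isT); m (@Ordinal 4 1 isT); m (@Ordinal 4 2 isT); m (@Ordinal 4 3 isT)].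

Lemma mk_e_of m : mk (e_of m) = m.
Proof.
apply/mnmP => i; rewrite mnmE.
case: i => -[|[|[|[|//]]]] Hi /=; congr (m _); exact: val_inj.
Qed.

Lemma mk_inj : {in Elist &, injective mk}.
Proof.
move=> e e' He He' Hm.
have s1 := allP Elist_size e He; have s2 := allP Elist_size e' He'.
apply: (@eq_from_nth _ 0%N); first by rewrite (eqP s1) (eqP s2).
move=> i; rewrite (eqP s1) => Hi.
have := congr1 (fun m : 'X_{1..4} => m (Ordinal Hi)) Hm; rewrite /= !mnmE //.
Qed.

Lemma e_of_mem (m : 'X_{1..4}) : mdeg m = 8%N -> e_of m \in Elist.
Proof.
rewrite mdegE !big_ord_recr big_ord0 /= => Hd.
apply: Elist_mem; rewrite -Hd /=; congr (_ + _ + _ + _)%N; congr (m _); exact: val_inj.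
Qed.

Section P.
Variable R : realType.

Lemma meval_ev (F : {mpoly R[4]}) x : F \is 8.-homog ->
  F.@[x] = ev (fun e => F@_(mk e)) x.
Proof.
move=> HF; rewrite mevalE /ev.
set g := fun m : 'X_{1..4} => F@_m * \prod_i x i ^+ m i.
have -> : \sum_(e <- Elist) F@_(mk e) * mon x e = \sum_(e <- Elist) g (mk e).
  apply: eq_bigr => e _; rewrite /g /mon; congr (_ * _).
  by apply: eq_bigr => i _; rewrite mnmE.
rewrite -(big_map mk predT g).
rewrite [RHS](bigID (fun m => m \in msupp F)).
rewrite [X in _ = _ + X]big1 ?addr0; last first.
  by move=> m /memN_msupp_eq0 H; rewrite /g H mul0r.
rewrite -[in RHS]big_filter; apply: perm_big.
apply: uniq_perm; first exact: msupp_uniq.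
  by rewrite filter_uniq // map_inj_in_uniq ?Elist_uniq //; exact: mk_inj.
move=> m; rewrite mem_filter; apply/idP/andP => [Hm|[//]]; split => //.
rewrite -(mk_e_of m); apply: map_f.
have Hd0 : mdeg m = 8%N := dhomog_mf HF Hm. move: Hd0; rewrite mdegE !big_ord_recr big_ord0 /= => Hd.
apply: Elist_mem; rewrite -Hd /=; congr (_ + _ + _ + _)%N; congr (m _); exact: val_inj.
Qed.

Lemma Oreal_nonneg (a b c d : R) : 0 <= a^+4 * c^+2 * d^+2 + b^+4 * a^+2 * d^+2 + c^+4 * a^+2 * b^+2 + d^+4 * b^+2 * c^+2
  - 4%:R * (a^+2 * b^+2 * c^+2 * d^+2).
Proof.
have ha : a ^+ 2 = `|a| ^+ 2 by rewrite real_normK ?num_real.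
have hc : c ^+ 2 = `|c| ^+ 2 by rewrite real_normK ?num_real.
have ha4 : a ^+ 4 = `|a| ^+ 4 by rewrite (_ : 4 = 2 * 2)%N // !exprM ha.
have hc4 : c ^+ 4 = `|c| ^+ 4 by rewrite (_ : 4 = 2 * 2)%N // !exprM hc.
rewrite ha hc ha4 hc4.
have A0 : 0 <= `|a| by [].
have C0 : 0 <= `|c| by [].
move: A0 C0; set A := `|a|; set C := `|c| => A0 C0.
have -> : A ^+ 4 * C ^+ 2 * d ^+ 2 + b ^+ 4 * A ^+ 2 * d ^+ 2 + C ^+ 4 * A ^+ 2 * b ^+ 2 +
  d ^+ 4 * b ^+ 2 * C ^+ 2 - 4%:R * (A ^+ 2 * b ^+ 2 * C ^+ 2 * d ^+ 2) =
  (A * d) ^+ 2 * (A * C - b ^+ 2) ^+ 2 + (b * C) ^+ 2 * (A * C - d ^+ 2) ^+ 2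
  + 2%:R * (A * C) * (b * d) ^+ 2 * (A - C) ^+ 2 by ring.
apply: addr_ge0; first by apply: addr_ge0; apply: mulr_ge0; apply: sqr_ge0.
apply: mulr_ge0; last exact: sqr_ge0.
apply: mulr_ge0; last exact: sqr_ge0.
by apply: mulr_ge0; [|apply: mulr_ge0].
Qed.

Lemma x_inord (x : 'I_4 -> R) k (Hk : (k < 4)%N) : x (inord k) = x (Ordinal Hk).
Proof. congr (x _); apply: val_inj; by rewrite /= inordK. Qed.

Lemma O41_eval (x : 'I_4 -> R) : (O41 R).@[x] = ev (@ocoef R) (sg (x (@Ordinal 4 0 isT)) (x (@Ordinal 4 1 isT)) (x (@Ordinal 4 2 isT)) (x (@Ordinal 4 3 isT))).
Proof.
rewrite ev_ocoef /O41; cbv zeta.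
rewrite !(mevalB, mevalD, mevalM, rmorphXn, rmorph_nat, mevalXU).
rewrite !(x_inord x (isT : (0 < 4)%N), x_inord x (isT : (1 < 4)%N), x_inord x (isT : (2 < 4)%N), x_inord x (isT : (3 < 4)%N)) !meval1; ring.
Qed.

Lemma ev_sg (c : seq nat -> R) (x : 'I_4 -> R) : ev c x = ev c (sg (x (@Ordinal 4 0 isT)) (x (@Ordinal 4 1 isT)) (x (@Ordinal 4 2 isT)) (x (@Ordinal 4 3 isT))).
Proof.
apply: eq_bigr => e _; rewrite mon_sg /mon !big_ord_recr big_ord0 /= mul1r.
by congr (_ * (x _ ^+ _ * x _ ^+ _ * x _ ^+ _ * x _ ^+ _)); apply: val_inj.
Qed.

Lemma O41_ev (x : 'I_4 -> R) : (O41 R).@[x] = ev (@ocoef R) x.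
Proof. by rewrite O41_eval -ev_sg. Qed.

Lemma O41_homog : O41 R \is 8.-homog.
Proof.
rewrite /O41; cbv zeta.
have X1 : forall i : 'I_4, ('X_i : {mpoly R[4]}) \is 1.-homog by move=> i; rewrite dhomogX; apply/eqP; exact: mdeg1.
have P k i : ('X_i : {mpoly R[4]}) ^+ k \is (1 * k).-homog by apply: dhomogMn.
apply: rpredB; last first.
  rewrite mulr_natl; apply: rpredMn.
  exact: (dhomogM (dhomogM (dhomogM (P 2 _) (P 2 _)) (P 2 _)) (P 2 _)).
by repeat apply: rpredD; exact: (dhomogM (dhomogM (P 4 _) (P 2 _)) (P 2 _)).
Qed.
Lemma below_O (G : {mpoly R[4]}) : psd_form 8 G -> (forall x, G.@[x] <= (O41 R).@[x]) ->
  exists2 l, 0 <= l & G = l *: O41 R.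
Proof.
case=> HG Hpos HO.
pose c := fun e => G@_(mk e).
pose cO := fun e => (O41 R)@_(mk e).
have Hc : forall x, 0 <= ev c x <= ev (@ocoef R) x.
  by move=> x; rewrite -meval_ev // -O41_ev Hpos HO.
have HcO : forall x, 0 <= ev cO x <= ev (@ocoef R) x.
  move=> x; rewrite -meval_ev ?O41_homog // -O41_ev lexx andbT.
  by rewrite O41_eval ev_ocoef; exact: Oreal_nonneg.
have Hm := MT Hc; have HmO := MT HcO.
pose x0 := sg (1 : R) 0 1 1.
have Ox0 : ev (@ocoef R) x0 = 1 by rewrite /x0 ev_ocoef; ring.
have cO1 : cO [:: 4; 0; 2; 2]%N = 1.
  have : ev cO x0 = ev (@ocoef R) x0 by rewrite -meval_ev ?O41_homog // O41_ev.
  rewrite {1}/ev (eq_big_seq (fun e => cO [:: 4; 0; 2; 2]%N * (ocoef R e * mon x0 e))); last first.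
    by move=> e He; rewrite HmO // mulrA.
  by rewrite -mulr_sumr -/(ev _ _) Ox0 mulr1.
have GE : G = c [:: 4; 0; 2; 2]%N *: O41 R.
  apply/mpolyP => m; rewrite mcoeffZ.
  case: (mdeg m =P 8%N) => Hd.
    have He := e_of_mem Hd.
    rewrite -(mk_e_of m).
    have -> : G@_(mk (e_of m)) = c (e_of m) by [].
    have -> : (O41 R)@_(mk (e_of m)) = cO (e_of m) by [].
    by rewrite Hm // HmO // cO1 mul1r.
  rewrite (dhomog_nemf_coeff HG) ?(dhomog_nemf_coeff O41_homog) ?mulr0 //; exact/eqP.
exists (c [:: 4; 0; 2; 2]%N) => //.
have := Hpos x0; rewrite GE mevalZ O41_ev Ox0 mulr1 //.
Qed.

End P.

Theorem theorem1 (R : realType) : extremal_psd 8 (O41 R).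
Proof.
split.
  split; first exact: O41_homog.
  by move=> x; rewrite O41_eval ev_ocoef; exact: Oreal_nonneg.
move=> F1 F2 H1 H2 HO.
have [l1 l10 E1] : exists2 l, 0 <= l & F1 = l *: O41 R.
  apply: below_O => // x; rewrite HO mevalD lerDl; exact: H2.2.
have [l2 l20 E2] : exists2 l, 0 <= l & F2 = l *: O41 R.
  apply: below_O => // x; rewrite HO mevalD lerDr; exact: H1.2.
by exists l1, l2; split.
Qed.
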